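(* Let $b,t>0$ and let $\omega_j,c_j$ ($j=1,\dots,s$) be complex numbers with $$\limsup_{n\to\infty} t^{-n}\Big|\sum_j c_j\omega_j^n\Big|\le b.$$ Then $\{1,\dots,s\}$ can be partitioned into disjoint sets $J_1,J_2$ such that $\sum_{j\in J_2}c_j\omega_j^n=0$ for all positive integers $n$, and $|\omega_j|\le t$ for each $j\in J_1$. *)

(* Defs.v *)
From HB Require Import structures.
From mathcomp Require Import all_boot all_order all_algebra.
From mathcomp Require Import all_classical all_reals all_analysis.
From mathcomp Require Import complex.

(* Main.v *)
Require Import Defs.
From HB Require Import structures.
From mathcomp Require Import all_boot all_order all_algebra.
From mathcomp Require Import all_classical all_reals all_analysis.
From mathcomp Require Import complex ring lra.
Import Order.TTheory GRing.Theory Num.Theory.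
Local Open Scope ring_scope.
Local Open Scope complex_scope.

Section H.
Variable R : realType.
Local Notation nc := (@ComplexField.Normc.normc R).

Lemma nc_ge0 (z : R[i]) : 0 <= nc z.
Proof. by case: z => a b /=; exact: sqrtr_ge0. Qed.

Lemma ncM (x y : R[i]) : nc (x * y) = nc x * nc y.
Proof. exact: ComplexField.Normc.normcM. Qed.

Lemma ncD (x y : R[i]) : nc (x + y) <= nc x + nc y.
Proof. exact: (@le_normcD R x y). Qed.

Lemma ncX (x : R[i]) n : nc (x ^+ n) = nc x ^+ n.
Proof.
elim: n => [|n IH]; first by rewrite !expr0 ComplexField.Normc.normc1.
by rewrite !exprS ncM IH.
Qed.

Lemma nc_eq0 (x : R[i]) : (nc x == 0) = (x == 0).
Proof.
apply/eqP/eqP => [/ComplexField.Normc.eq0_normc//|->]; exact: ComplexField.Normc.normc0.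
Qed.

Lemma nc_sum (I : finType) (P : pred I) (F : I -> R[i]) :
  nc (\sum_(i | P i) F i) <= \sum_(i | P i) nc (F i).
Proof.
elim/big_rec2: _ => [|i y1 y2 _ H]; first by rewrite ComplexField.Normc.normc0.
by apply: le_trans (ncD _ _) _; rewrite lerD2l.
Qed.

Lemma bern (h : R) n : 0 <= h -> 1 + n%:R * h <= (1 + h) ^+ n.
Proof.
move=> h0; elim: n => [|n IH]; first by rewrite mul0r addr0 expr0.
have h1 : 0 <= 1 + h by lra.
rewrite exprS; have H := ler_wpM2l h1 IH.
have n0 : 0 <= n%:R :> R by [].
rewrite -natr1; apply: (le_trans _ H).
nra.
Qed.

Lemma aux (x y z : R) : 0 < x -> 0 <= y -> x + y + z < z -> false.
Proof. by move=> *; lra. Qed.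

Lemma key (s : nat) (w c : 'I_s -> R[i]) (t B : R) (N : nat) (ht : 0 < t)
 (hB : forall n, (N <= n)%N -> nc (\sum_(j < s) c j * w j ^+ n) <= B * t ^+ n)
 (j0 : 'I_s) (hj : t < nc (w j0)) :
 \sum_(j | w j == w j0) c j = 0.
Proof.
set u := fun n => \sum_(j < s) c j * w j ^+ n.
set a := w j0.
set P := \prod_(j | w j != a) ('X - (w j)%:P).
have Pa : P.[a] != 0.
  rewrite horner_prod; apply/prodf_neq0 => j hj'.
  by rewrite hornerXsubC subr_eq0 eq_sym.
have Pw j : w j != a -> P.[w j] = 0.
  by move=> hj'; rewrite horner_prod (bigD1 j) //= hornerXsubC subrr mul0r.
set C := \sum_(j | w j == a) c j.
have id n : \sum_(k < size P) P`_k * u (n + k)%N = C * P.[a] * a ^+ n.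
  rewrite /u; under eq_bigr do rewrite mulr_sumr.
  rewrite exchange_big /=.
  transitivity (\sum_j c j * w j ^+ n * P.[w j]).
    apply: eq_bigr => j _; rewrite horner_coef mulr_sumr; apply: eq_bigr => k _.
    rewrite exprD; ring.
  rewrite (bigID (fun j => w j == a)) /= [X in _ + X]big1 ?addr0; last first.
    by move=> j hj'; rewrite Pw // mulr0.
  rewrite /C !mulr_suml; apply: eq_bigr => j /eqP ->; ring.
apply/eqP; apply: contraT => C0.
set d := nc (C * P.[a]).
have d0 : 0 < d by rewrite lt_def nc_eq0 mulf_neq0 // nc_ge0.
set K := B * \sum_(k < size P) nc P`_k * t ^+ k.
have bound n : (N <= n)%N -> d * nc a ^+ n <= K * t ^+ n.
  move=> Nn; rewrite /d -ncX -ncM -id.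
  apply: le_trans (nc_sum _ _ _) _.
  rewrite /K mulr_sumr mulr_suml; apply: ler_sum => k _.
  rewrite ncM.
  have := hB _ (leq_trans Nn (leq_addr k n)) => H.
  apply: le_trans (ler_wpM2l (nc_ge0 _) H) _.
  rewrite le_eqVlt; apply/orP; left; apply/eqP; rewrite exprD; ring.
set q := nc a / t.
have q1 : 0 <= q - 1.
  by rewrite subr_ge0 /q ler_pdivlMr // mul1r ltW.
have q1' : 0 < q - 1.
  by rewrite subr_gt0 /q ltr_pdivlMr // mul1r.
have boundq n : (N <= n)%N -> d * q ^+ n <= K.
  move=> Nn; rewrite /q expr_div_n mulrA ler_pdivrMr ?exprn_gt0 //; exact: bound.
set M := (Num.truncn (K / (d * (q - 1)))).+1.
have HM := truncnS_gt (K / (d * (q - 1))).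
have := boundq (N + M)%N (leq_addr _ _).
have := @bern (q - 1) (N + M)%N q1.
move=> Hb Hq.
have e : 1 + (q - 1) = q by ring.
rewrite e in Hb.
have H1 : d * (1 + (N + M)%N%:R * (q - 1)) <= K.
  by apply: le_trans Hq; rewrite ler_pM2l.
rewrite -/M in HM.
rewrite ltr_pdivrMr ?mulr_gt0 // in HM.
rewrite natrD in H1.
have H2 : 0 <= d * N%:R * (q - 1) by rewrite !mulr_ge0 // ltW.
have E : d * (1 + (N%:R + M%:R) * (q - 1)) = d + d * N%:R * (q - 1) + M%:R * (d * (q - 1)) by ring.
rewrite E in H1.
have H3 := le_lt_trans H1 HM.
exact: aux d0 H2 H3.
Qed.

Lemma closed_sum (s : nat) (w c : 'I_s -> R[i]) n (S : {set 'I_s}) :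
  (forall j i, j \in S -> w i = w j -> i \in S) ->
  (forall j, j \in S -> \sum_(i | w i == w j) c i = 0) ->
  \sum_(j in S) c j * w j ^+ n = 0.
Proof.
elim: {S}_.+1 {-2}S (ltnSn #|S|) => // m IH S Sm hcl hz.
have [->|[j0 j0S]] := set_0Vmem S; first by rewrite big_set0.
rewrite (bigID (fun j => w j == w j0)) /=.
set S' := [set j in S | w j != w j0].
have -> : \sum_(i in S | w i != w j0) c i * w i ^+ n = \sum_(i in S') c i * w i ^+ n.
  by apply: eq_bigl => i; rewrite inE.
rewrite IH; first last.
- by move=> j; rewrite inE => /andP[jS _]; exact: hz.
- move=> j i; rewrite !inE => /andP[jS jn] e; rewrite e jn andbT; exact: hcl jS e.
- rewrite ltnS in Sm; apply: (leq_trans _ Sm); apply: proper_card; rewrite finset.properEneq; apply/andP; split.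
    by apply/eqP => e; have := j0S; rewrite -e inE eqxx andbF.
  by apply/fintype.subsetP => j; rewrite inE => /andP[].
rewrite addr0.
transitivity ((\sum_(i | w i == w j0) c i) * w j0 ^+ n); last by rewrite hz // mul0r.
rewrite mulr_suml; apply: eq_big.
  move=> i; case e: (w i == w j0); rewrite ?andbF ?andbT //; exact: hcl j0S (eqP e).
by move=> i /andP[_ /eqP ->].
Qed.

End H.

Theorem lemma12p7 (R : realType) (s : nat) (b t : R)
  (w c : 'I_s -> R[i]) (hb : 0 < b) (ht : 0 < t)
  (hlim : (limn_esup (fun n : nat =>
      ((t ^- n * ComplexField.Normc.normc (\sum_(j < s) c j * w j ^+ n))%:E)) <= b%:E)%E) :
  exists J1 J2 : {set 'I_s},
    [/\ [disjoint J1 & J2], J1 :|: J2 = [set: 'I_s],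
        (forall n : nat, (0 < n)%N -> \sum_(j in J2) c j * w j ^+ n = 0)
      & (forall j, j \in J1 -> ComplexField.Normc.normc (w j) <= t)].
Proof.
have [N HN] : exists N, forall n, (N <= n)%N ->
    ComplexField.Normc.normc (\sum_(j < s) c j * w j ^+ n) <= (b + 1) * t ^+ n.
  have : (limn_esup (fun n : nat =>
      ((t ^- n * ComplexField.Normc.normc (\sum_(j < s) c j * w j ^+ n))%:E)) < (b+1)%:E)%E.
    by apply: (le_lt_trans hlim); rewrite lte_fin ltrDl.
  rewrite /limn_esup /limf_esup => /ereal_inf_lt [_ [V HV <-]] HVb.
  case: HV => N _ HN; exists N => n Nn.
  have : (t ^- n * ComplexField.Normc.normc (\sum_(j < s) c j * w j ^+ n) < b + 1).
    rewrite -lte_fin; apply: le_lt_trans HVb.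
    apply: ereal_sup_ubound; exists n => //; exact: HN.
  have tn : 0 < t ^+ n by rewrite exprn_gt0.
  rewrite ltr_pdivrMl // => H; rewrite mulrC; exact: ltW.
set J2 := [set j | t < ComplexField.Normc.normc (w j)].
exists (~: J2), J2; split.
- by rewrite -finset.setI_eq0 finset.setIC finset.setICr.
- by rewrite finset.setUC finset.setUCr.
- move=> n _; apply: closed_sum.
    by move=> j i; rewrite !inE => hj ->.
  move=> j; rewrite inE => hj; exact: (@key R s w c t (b + 1) N ht HN j hj).
- by move=> j; rewrite !inE -leNgt.
Qed.
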